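(* Let $m\ge 2$. Consider the following three (not necessarily simple) graphs. (1) ($s=1$) Let $C_{4m+2}=v_0v_1\cdots v_{4m+1}v_0$. Let $\mathscr A$ be any partition of the even-indexed vertices other than $v_0$ into blocks of size $2$, $\mathscr B$ any partition of the odd-indexed vertices other than $v_{2m+1}$ into blocks of size $2$, and $\mathscr C=\{v_0,v_{2m+1}\}$. $G^1_{2m+1}(\mathscr A,\mathscr B,\mathscr C)$ is obtained from $C_{4m+2}$ by identifying the two vertices of each block of $\mathscr A\cup\mathscr B\cup\{\mathscr C\}$. (2) ($s=2$) Let $C_{4m+1}=v_0v_1\cdots v_{4m}v_0$. Let $\mathscr A$ be any partition of the even-indexed vertices other than $v_0$ into blocks of size $2$, $\mathscr B$ any partition of the odd-indexed vertices into blocks of size $2$, and $\mathscr C=\{v_0\}$. $G^2_{2m+1}(\mathscr A,\mathscr B,\mathscr C)$ is obtained from $C_{4m+1}$ by identifying the two vertices of each block of $\mathscr A\cup\mathscr B$ (and leaving $v_0$ alone). (3) ($s=3$) Let $C_{4m+3}=v_0v_1\cdots v_{4m+2}v_0$. Let $\mathscr C=\{v_0,v_{m+1},v_{3m+2}\}$, let $\mathscr A$ be any partition of the even-indexed vertices not in $\mathscr C$ into blocks of size $2$ and $\mathscr B$ any partition of the odd-indexed vertices not in $\mathscr C$ into blocks of size $2$. $G^3_{2m+1}(\mathscr A,\mathscr B,\mathscr C)$ is obtained from $C_{4m+3}$ by identifying the three vertices of $\mathscr C$ into one vertex and identifying the two vertices of each block of $\mathscr A\cup\mathscr B$. Then $\chi_{la}(G^s_{2m+1}(\mathscr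 A,\mathscr B,\mathscr C))=3$ for $s=1,2,3$.
   Context: Identifying a set of pairwise nonadjacent vertices means replacing them by one new vertex incident to all edges previously incident to any of them (parallel edges may arise). For a connected (multi)graph $G$ with edge set $E$, $|E|=q$, a local antimagic labeling is a bijection $f:E\to\{1,\dots,q\}$ such that adjacent vertices $x,y$ satisfy $f^+(x)\ne f^+(y)$, where $f^+(x)$ is the sum of the labels of the edges incident to $x$; $\chi_{la}(G)$ is the minimum number of distinct values of $f^+$ over all local antimagic labelings of $G$. *)

(* Defs.v *)
From mathcomp Require Import all_boot all_order.
Set Implicit Arguments. Unset Strict Implicit. Unset Printing Implicit Defensive.

(* The cycle C_n has vertices v_i = i : 'I_n and edges e_i = v_i v_{i+1 mod n},
   indexed by i : 'I_n.  Identifying the vertices of each block of a partition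
   P of the vertex set yields a multigraph whose vertex set is P (a block X
   is the new vertex) and whose edges are the e_i; edge e_i is incident to the
   vertex/block X iff one of its endpoints v_i, v_{i+1} lies in X. *)

Definition cyc_incident n (X : {set 'I_n}) (i : 'I_n) : bool :=
  (i \in X) || (ordS i \in X).

Definition vsum n (f : 'I_n -> nat) (X : {set 'I_n}) : nat :=
  \sum_(i | cyc_incident X i) f i.

Definition edge_labeling n (f : 'I_n -> nat) : Prop :=
  injective f /\ (forall i, 1 <= f i <= n) /\
  (forall k, 1 <= k <= n -> exists i, f i = k).

Definition local_antimagic n (P : {set {set 'I_n}}) (f : 'I_n -> nat) : Prop :=
  edge_labeling f /\
  forall X Y, X \in P -> Y \in P -> X != Y ->
    (exists i : 'I_n, (i \in X /\ ordS i \in Y) \/ (i \in Y /\ ordS i \in X)) ->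
    vsum f X != vsum f Y.

Definition nvals n (P : {set {set 'I_n}}) (f : 'I_n -> nat) : nat :=
  size (undup [seq vsum f X | X <- enum P]).

Definition chi_la_is n (P : {set {set 'I_n}}) (k : nat) : Prop :=
  (exists f, local_antimagic P f /\ nvals P f = k) /\
  (forall f, local_antimagic P f -> k <= nvals P f).

Definition pair_partition n (A : {set {set 'I_n}}) (S : {set 'I_n}) : Prop :=
  partition A S /\ (forall b : {set 'I_n}, b \in A -> #|b| = 2).

(* Main.v *)
Require Import Defs.
From mathcomp Require Import all_boot all_order.
From mathcomp Require Import zify.
Set Implicit Arguments. Unset Strict Implicit. Unset Printing Implicit Defensive.

Definition F (n i : nat) := if i %% 2 == 1 then n - i %/ 2 else i %/ 2 + 1.
Definition lab n (i : 'I_n) := F n i.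

Lemma oddE i : odd i = (i %% 2 == 1).
Proof. by rewrite modn2; case: (odd i). Qed.

Lemma lab_ok n : 0 < n -> edge_labeling (@lab n).
Proof.
move=> n0; split; [|split].
- move=> i j; rewrite /lab /F => h; apply/val_inj => /=.
  have hi := ltn_ord i; have hj := ltn_ord j.
  move: h; case: ifP => hi2; case: ifP => hj2; lia.
- move=> i; rewrite /lab /F; have := ltn_ord i; case: ifP => _; lia.
- move=> k hk; case: (leqP (2*k) (n+1)) => hk2.
  + have hi : 2 * (k-1) < n by lia.
    exists (Ordinal hi); rewrite /lab /F /=; case: ifP; lia.
  + have hi : 2 * (n-k) + 1 < n by lia.
    exists (Ordinal hi); rewrite /lab /F /=; case: ifP; lia.
Qed.

Lemma valS n (i : 'I_n) : val (ordS i) = if i.+1 == n then 0 else i.+1.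
Proof.
rewrite /=; case: eqP => [->|h]; first by rewrite modnn.
rewrite modn_small //; have := ltn_ord i; lia.
Qed.

Lemma valP n (i : 'I_n) : val (ord_pred i) = if (i:nat) == 0 then n.-1 else i.-1.
Proof.
have hi := ltn_ord i.
rewrite /=; case: eqP => [->|h].
  by rewrite add0n modn_small //; lia.
have -> : (i + n).-1 = i.-1 + n by lia.
by rewrite modnDr modn_small //; lia.
Qed.

Lemma vsumE n (f : 'I_n -> nat) (X : {set 'I_n}) :
  (forall i, i \in X -> ordS i \notin X) ->
  vsum f X = \sum_(v in X) (f v + f (ord_pred v)).
Proof.
move=> hX; rewrite /vsum /cyc_incident big_split /=.
have -> : \sum_(i | (i \in X) || (ordS i \in X)) f i =
          \sum_(i in X) f i + \sum_(i | ordS i \in X) f i.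
  rewrite [LHS]big_mkcond [\sum_(i in X) _]big_mkcond [\sum_(i | ordS i \in X) _]big_mkcond -big_split /=.
  apply: eq_bigr => i _.
  case hi: (i \in X); case hs: (ordS i \in X) => //=.
  - by move: (hX i hi); rewrite hs.
  - by rewrite addn0.
congr (_ + _).
rewrite (reindex (@ord_pred n)) /=; last exact: onW_bij (ord_pred_bij n).
by apply: eq_bigl => v; rewrite ord_predK.
Qed.

Lemma vs_nz n (v : 'I_n) : (v:nat) != 0 ->
  lab v + lab (ord_pred v) = if odd v then n.+1 else n.+2.
Proof.
move=> h; rewrite /lab /F valP (negbTE h) oddE.
have := ltn_ord v; move: h; repeat case: ifP => ?; lia.
Qed.

Lemma vs_0 n (v : 'I_n) : (v:nat) = 0 ->
  lab v + lab (ord_pred v) = F n n.-1 + 1.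
Proof. by move=> h; rewrite /lab valP h /= addnC /F mod0n div0n. Qed.

Definition idx n (Hn : 0 < n) k : 'I_n := Ordinal (ltn_pmod k Hn).

Lemma idxS n (Hn : 0 < n) k : ordS (idx Hn k) = idx Hn k.+1.
Proof. by apply/val_inj => /=; rewrite -addn1 modnDml addn1. Qed.

Lemma three n (P : {set {set 'I_n}}) f (X Y Z : {set 'I_n}) :
  X \in P -> Y \in P -> Z \in P -> vsum f X != vsum f Y ->
  vsum f Y != vsum f Z -> vsum f X != vsum f Z -> 3 <= nvals P f.
Proof.
move=> hX hY hZ h1 h2 h3; rewrite /nvals.
have -> : 3 = size [:: vsum f X; vsum f Y; vsum f Z] by [].
apply: uniq_leq_size.
  by rewrite /= !inE negb_or h1 h3 h2.
move=> x; rewrite !inE mem_undup => /or3P [] /eqP ->; apply/mapP;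
  [exists X|exists Y|exists Z]; by rewrite ?mem_enum.
Qed.

Lemma lb n (Hn : 0 < n) (P : {set {set 'I_n}}) f j : local_antimagic P f ->
  (forall v, exists2 Y, Y \in P & v \in Y) ->
  (forall Y, Y \in P -> forall i, i \in Y -> ordS i \notin Y) ->
  (forall Y1 Y2, Y1 \in P -> Y2 \in P -> idx Hn 0 \in Y1 -> idx Hn j \in Y2 -> Y1 = Y2) ->
  odd j -> 3 <= nvals P f.
Proof.
move=> [_ hf] hcov hedge huniq hj.
pose X k := odflt set0 [pick Y in P | idx Hn k \in Y].
have hX k : X k \in P /\ idx Hn k \in X k.
  rewrite /X; case: pickP => [Y /andP[]|h] //=.
  case: (hcov (idx Hn k)) => Y hY hk; by move: (h Y); rewrite hY hk.
have hne k : vsum f (X k) != vsum f (X k.+1).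
  case: (hX k) => h1 h2; case: (hX k.+1) => h3 h4.
  apply: hf => //.
    apply/negP => /eqP e; move: (hedge _ h1 _ h2); by rewrite idxS e h4.
  exists (idx Hn k); left; split => //; by rewrite idxS.
case: (ltnP (nvals P f) 3) => // hlt; exfalso.
have step k : vsum f (X k.+2) = vsum f (X k).
  apply/eqP; apply/negPn/negP => h.
  have := three (hX k).1 (hX k.+1).1 (hX k.+2).1 (hne k) (hne k.+1).
  by rewrite eq_sym h leqNgt hlt => /(_ isT).
have alt2 k : vsum f (X k) = vsum f (X (odd k)) /\ vsum f (X k.+1) = vsum f (X (odd k.+1)).
  elim: k => [|k [IH1 IH2]]; first by [].
  split; first exact IH2.
  by rewrite step /= negbK.
have e : X 0 = X j := huniq _ _ (hX 0).1 (hX j).1 (hX 0).2 (hX j).2.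
have := (alt2 j).1; rewrite hj -e => e2.
by move: (hne 0); rewrite e2 eqxx.
Qed.

Lemma generic n (Hn : 0 < n) (A B : {set {set 'I_n}}) (SA SB C : {set 'I_n}) j zC :
  pair_partition A SA -> pair_partition B SB ->
  (forall v, v \in SA -> ~~ odd v && ((v:nat) != 0)) ->
  (forall v, v \in SB -> odd v) ->
  (forall v, v \in C -> (v \notin SA) && (v \notin SB)) ->
  (forall v, [|| v \in SA, v \in SB | v \in C]) ->
  (forall i, i \in C -> ordS i \notin C) ->
  \sum_(v in C) (lab v + lab (ord_pred v)) = zC ->
  zC != 2 * (n + 2) -> zC != 2 * (n + 1) ->
  odd j -> idx Hn 0 \in C -> idx Hn j \in C ->
  chi_la_is (A :|: B :|: [set C]) 3.
Proof.
move=> [hpA hcA] [hpB hcB] hSA hSB hC hall hCe hz hz1 hz2 hj h0 hjC.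
set P := A :|: B :|: [set C].
have memP Y : (Y \in P) = [|| Y \in A, Y \in B | Y == C].
  by rewrite !inE -orbA.
case/and3P: hpA => /eqP covA _ _; case/and3P: hpB => /eqP covB _ _.
have subA Y v : Y \in A -> v \in Y -> v \in SA.
  by move=> hY hv; rewrite -covA; apply/bigcupP; exists Y.
have subB Y v : Y \in B -> v \in Y -> v \in SB.
  by move=> hY hv; rewrite -covB; apply/bigcupP; exists Y.
have evens i : i \in SA -> ordS i \in SA -> False.
  move=> /hSA /andP[e1 n1] /hSA /andP[]; rewrite valS.
  by case: eqP => [_|_] /=; [|rewrite negbK (negbTE e1)].
have odds i : i \in SB -> ordS i \in SB -> False.
  move=> /hSB h1 /hSB; rewrite valS.
  by case: eqP => [_|_] /=; [|rewrite h1].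
have noedge Y : Y \in P -> forall i, i \in Y -> ordS i \notin Y.
  rewrite memP => /or3P [hY|hY|/eqP ->] i hi; apply/negP => hs.
  - exact: (evens i (subA _ _ hY hi) (subA _ _ hY hs)).
  - exact: (odds i (subB _ _ hY hi) (subB _ _ hY hs)).
  - by move: (hCe i hi); rewrite hs.
have sumA Y : Y \in A -> vsum (@lab n) Y = 2 * (n + 2).
  move=> hY; rewrite vsumE; last by apply: noedge; rewrite memP hY.
  rewrite (eq_bigr (fun _ => n.+2)) ?sum_nat_const ?hcA //; first lia.
  move=> v hv; case/andP: (hSA _ (subA _ _ hY hv)) => ho hnz.
  by rewrite vs_nz // (negbTE ho).
have sumB Y : Y \in B -> vsum (@lab n) Y = 2 * (n + 1).
  move=> hY; rewrite vsumE; last by apply: noedge; rewrite memP hY orbT.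
  rewrite (eq_bigr (fun _ => n.+1)) ?sum_nat_const ?hcB //; first lia.
  move=> v hv; have ho := hSB _ (subB _ _ hY hv).
  rewrite vs_nz ?ho //; by apply/eqP => e; move: ho; rewrite e.
have sumC : vsum (@lab n) C = zC.
  by rewrite vsumE.
have onlyC Y v : Y \in P -> v \in C -> v \in Y -> Y = C.
  move=> hP hv hvY; move: hP; rewrite memP => /or3P [hY|hY|/eqP //];
    case/andP: (hC _ hv).
  - by rewrite (subA _ _ hY hvY).
  - by rewrite (subB _ _ hY hvY).
have key X Y i : X \in P -> Y \in P -> X != Y -> i \in X -> ordS i \in Y ->
    vsum (@lab n) X != vsum (@lab n) Y.
  move=> hX hY hXY hi hs; move: hX hY hXY; rewrite !memP.
  case/or3P => [hX|hX|/eqP eX]; case/or3P => [hY|hY|/eqP eY] => hXY.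
  - by case: (evens i (subA _ _ hX hi) (subA _ _ hY hs)).
  - rewrite sumA // sumB //; apply/eqP; lia.
  - by rewrite sumA // eY sumC eq_sym.
  - rewrite (sumA Y) // (sumB X) //; apply/eqP; lia.
  - by case: (odds i (subB _ _ hX hi) (subB _ _ hY hs)).
  - by rewrite sumB // eY sumC eq_sym.
  - by rewrite (sumA Y) // eX sumC.
  - by rewrite (sumB Y) // eX sumC.
  - by move: hXY; rewrite eX eY eqxx.
have hf : local_antimagic P (@lab n).
  split; first exact: lab_ok.
  move=> X Y hX hY hXY [i [[hi hs]|[hi hs]]]; first exact: (key X Y i).
  by rewrite eq_sym; apply: (key Y X i) => //; rewrite eq_sym.
have hcov v : exists2 Y, Y \in P & v \in Y.
  case/or3P: (hall v) => hv.
  - by rewrite -covA in hv; case/bigcupP: hv => Y hY hv; exists Y; rewrite // memP hY.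
  - by rewrite -covB in hv; case/bigcupP: hv => Y hY hv; exists Y; rewrite // memP hY orbT.
  - by exists C; rewrite // memP eqxx !orbT.
have low g : local_antimagic P g -> 3 <= nvals P g.
  move=> hg; apply: (lb (Hn := Hn) (j := j)) => //.
  move=> Y1 Y2 h1 h2 e1 e2; by rewrite (onlyC _ _ h1 h0 e1) (onlyC _ _ h2 hjC e2).
split => //.
exists (@lab n); split => //.
apply/eqP; rewrite eqn_leq low // andbT /nvals.
have -> : 3 = size [:: 2 * (n + 2); 2 * (n + 1); zC] by [].
apply: uniq_leq_size; first exact: undup_uniq.
move=> x; rewrite mem_undup => /mapP [Y]; rewrite mem_enum memP => hY ->.
case/or3P: hY => [hY|hY|/eqP ->]; [rewrite sumA //|rewrite sumB //|rewrite sumC]; by rewrite !inE eqxx ?orbT.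
Qed.

Lemma sum1 n (g : 'I_n -> nat) (C : {set 'I_n}) (a : 'I_n) :
  (forall v : 'I_n, (v \in C) = ((v:nat) == a)) ->
  \sum_(v in C) g v = g a.
Proof.
move=> hC; rewrite (eq_bigl (mem [:: a])); last by move=> v; rewrite hC !inE.
by rewrite -big_uniq //= big_cons big_nil addn0.
Qed.

Lemma sum2 n (g : 'I_n -> nat) (C : {set 'I_n}) (a b : 'I_n) :
  (a:nat) != b ->
  (forall v : 'I_n, (v \in C) = ((v:nat) == a) || ((v:nat) == b)) ->
  \sum_(v in C) g v = g a + g b.
Proof.
move=> hab hC; rewrite (eq_bigl (mem [:: a; b])); last by move=> v; rewrite hC !inE.
by rewrite -big_uniq /= ?big_cons ?big_nil ?addn0 // inE andbT.
Qed.

Lemma sum3 n (g : 'I_n -> nat) (C : {set 'I_n}) (a b c : 'I_n) :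
  (a:nat) != b -> (a:nat) != c -> (b:nat) != c ->
  (forall v : 'I_n, (v \in C) = [|| (v:nat) == a, (v:nat) == b | (v:nat) == c]) ->
  \sum_(v in C) g v = g a + g b + g c.
Proof.
move=> hab hac hbc hC; rewrite (eq_bigl (mem [:: a; b; c])); last by move=> v; rewrite hC !inE.
rewrite -big_uniq /= ?big_cons ?big_nil ?addn0 ?addnA //.
by rewrite !inE negb_or hab hac hbc.
Qed.

Lemma case1 m : 2 <= m ->
  (forall A B : {set {set 'I_(4 * m + 2)}},
     pair_partition A [set i : 'I_(4 * m + 2) | ~~ odd i & val i != 0] ->
     pair_partition B [set i : 'I_(4 * m + 2) | odd i & val i != 2 * m + 1] ->
     chi_la_is (A :|: B :|: [set [set i : 'I_(4 * m + 2) | (val i == 0) || (val i == 2 * m + 1)]]) 3).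
Proof.
move=> hm A B hA hB.
have Hn : 0 < 4 * m + 2 by lia.
have h1 : 2 * m + 1 < 4 * m + 2 by lia.
apply: (generic (Hn := Hn) (j := 2 * m + 1) (zC := 6 * m + 6) hA hB).
- by move=> v; rewrite inE.
- by move=> v; rewrite inE => /andP[].
- move=> v; rewrite !inE /= !oddE; lia.
- move=> v; rewrite !inE /= !oddE; lia.
- move=> i; rewrite !inE valS; have := ltn_ord i; case: ifP => /=; lia.
- rewrite (@sum2 _ _ _ (Ordinal Hn) (Ordinal h1)) /=; last 2 first.
  + lia.
  + by move=> v; rewrite inE.
  rewrite vs_0 // vs_nz /=; last lia.
  rewrite oddE /F; case: ifP; case: ifP; lia.
- apply/eqP; lia.
- apply/eqP; lia.
- rewrite oddE; lia.
- by rewrite inE /= mod0n.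
- by rewrite inE /= modn_small // eqxx orbT.
Qed.

Lemma case2 m : 2 <= m ->
  (forall A B : {set {set 'I_(4 * m + 1)}},
     pair_partition A [set i : 'I_(4 * m + 1) | ~~ odd i & val i != 0] ->
     pair_partition B [set i : 'I_(4 * m + 1) | odd i] ->
     chi_la_is (A :|: B :|: [set [set i : 'I_(4 * m + 1) | val i == 0]]) 3).
Proof.
move=> hm A B hA hB.
have Hn : 0 < 4 * m + 1 by lia.
apply: (generic (Hn := Hn) (j := 4 * m + 1) (zC := 2 * m + 2) hA hB).
- by move=> v; rewrite inE.
- by move=> v; rewrite inE.
- move=> v; rewrite !inE /= !oddE; lia.
- move=> v; rewrite !inE /= !oddE; lia.
- move=> i; rewrite !inE valS; have := ltn_ord i; case: ifP => /=; lia.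
- rewrite (@sum1 _ _ _ (Ordinal Hn)) /=; last by move=> v; rewrite inE.
  rewrite vs_0 // /F; case: ifP; lia.
- apply/eqP; lia.
- apply/eqP; lia.
- rewrite oddE; lia.
- by rewrite inE /= mod0n.
- by rewrite inE /= modnn.
Qed.

Lemma case3 m : 2 <= m ->
  (forall A B : {set {set 'I_(4 * m + 3)}},
     let C := [set i : 'I_(4 * m + 3) |
                 [|| val i == 0, val i == m + 1 | val i == 3 * m + 2]] in
     pair_partition A [set i : 'I_(4 * m + 3) | ~~ odd i & i \notin C] ->
     pair_partition B [set i : 'I_(4 * m + 3) | odd i & i \notin C] ->
     chi_la_is (A :|: B :|: [set C]) 3).
Proof.
move=> hm A B C hA hB.
have Hn : 0 < 4 * m + 3 by lia.
have h1 : m + 1 < 4 * m + 3 by lia.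
have h2 : 3 * m + 2 < 4 * m + 3 by lia.
have hj : exists2 j, odd j & (j == m + 1) || (j == 3 * m + 2).
  case ho: (odd (m + 1)); first by exists (m + 1); rewrite ?eqxx.
  exists (3 * m + 2); last by rewrite eqxx orbT.
  move: ho; rewrite !oddE; lia.
case: hj => j hj hjv.
apply: (generic (Hn := Hn) (j := j) (zC := 10 * m + 12) hA hB).
- move=> v; rewrite /C !inE /= !oddE; lia.
- by move=> v; rewrite inE => /andP[].
- move=> v; rewrite /C !inE /= !oddE; lia.
- move=> v; rewrite /C !inE /= !oddE; lia.
- move=> i; rewrite /C !inE valS; have := ltn_ord i; case: ifP => /=; lia.
- rewrite (@sum3 _ _ _ (Ordinal Hn) (Ordinal h1) (Ordinal h2)) /=; last 4 first.
  + lia.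
  + lia.
  + lia.
  + by move=> v; rewrite inE.
  rewrite vs_0 // !vs_nz /=; try lia.
  rewrite !oddE /F; repeat case: ifP => ?; lia.
- apply/eqP; lia.
- apply/eqP; lia.
- exact: hj.
- by rewrite /C inE /= mod0n.
- rewrite /C inE /= modn_small; lia.
Qed.

Theorem mainTheorem10 (m : nat) : 2 <= m ->
  (* s = 1 : C_{4m+2}, C = {v_0, v_{2m+1}} *)
  (forall A B : {set {set 'I_(4 * m + 2)}},
     pair_partition A [set i : 'I_(4 * m + 2) | ~~ odd i & val i != 0] ->
     pair_partition B [set i : 'I_(4 * m + 2) | odd i & val i != 2 * m + 1] ->
     chi_la_is (A :|: B :|: [set [set i : 'I_(4 * m + 2) | (val i == 0) || (val i == 2 * m + 1)]]) 3)
  /\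
  (* s = 2 : C_{4m+1}, C = {v_0} *)
  (forall A B : {set {set 'I_(4 * m + 1)}},
     pair_partition A [set i : 'I_(4 * m + 1) | ~~ odd i & val i != 0] ->
     pair_partition B [set i : 'I_(4 * m + 1) | odd i] ->
     chi_la_is (A :|: B :|: [set [set i : 'I_(4 * m + 1) | val i == 0]]) 3)
  /\
  (* s = 3 : C_{4m+3}, C = {v_0, v_{m+1}, v_{3m+2}} *)
  (forall A B : {set {set 'I_(4 * m + 3)}},
     let C := [set i : 'I_(4 * m + 3) |
                 [|| val i == 0, val i == m + 1 | val i == 3 * m + 2]] in
     pair_partition A [set i : 'I_(4 * m + 3) | ~~ odd i & i \notin C] ->
     pair_partition B [set i : 'I_(4 * m + 3) | odd i & i \notin C] ->
     chi_la_is (A :|: B :|: [set C]) 3).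
Proof.
move=> hm; split; [exact: case1 | split; [exact: case2 | exact: case3]].
Qed.
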